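(* Let $\delta\in\{0,1\}$, $l>0$, let $g\geq 0$ and $n\geq 0$ be integers, let $a,b\in\frac12\mathbb{Z}$ with $2b\equiv 2\delta a \pmod 2$, and let $\mu\neq\emptyset$ be a partition with $\|\mu\|=2b$. Then the subspace of the moduli space $\mathcal{M}_{g,n}(\mathbb{T}M_\delta,(a,b),\mu)$ parametrizing simple tropical curves has dimension $|\mu|+g-1+n$.
   Context: For $\delta\in\{0,1\}$ and $l>0$ let $\varphi_\delta:\mathbb{R}^2\to\mathbb{R}^2$, $\varphi_\delta(x,y)=(x+l,\delta x-y)$. The tropical Möbius strip $\mathbb{T}M_\delta$ is the quotient $\mathbb{R}^2/\langle\varphi_\delta\rangle$ with the integral affine structure induced by $\mathbb{Z}^2\subset\mathbb{R}^2$; it projects onto the tropical elliptic curve $\mathbb{T}E=\mathbb{R}/l\mathbb{Z}$ via $(x,y)\mapsto x$. An abstract tropical curve is a finite metric graph $\Gamma$ whose edges are bounded edges (finite length) or ends (unbounded, infinite length, adjacent to a single vertex); its genus is $g=1-\chi(\Gamma)$. A parametrized tropical curve is a map $h:\Gamma\to\mathbb{T}M_\delta$ that is affine on each edge with integer slope (derivative in $\mathbb{Z}^2$ in the affine charts coming from $\mathbb{R}^2$) and is balanced: at each vertex the sum of outgoing slopes is $0$. The weight of an edge is the integral length of its slope. The curve is simple if $\Gamma$ is trivalent and $h$ is an immersion. The tropical homology group is $H_{1,1}(\mathbb{T}M_\delta,\mathbb{Z})=\{aE+bF: a,b\in\frac12\mathbb{Z},\ 2b\equiv 2\delta a \bmod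 2\}$, where $F$ is the class of a fiber of the projection to $\mathbb{T}E$ and $E$ the class of the boundary at infinity; a curve has class $aE+bF$ when its ends (which are vertical rays) have total weight $2b$ and its tropical intersection number with a fiber is $2a$. For a partition $\mu$ written as multiplicities $(\mu_i)_{i\ge1}$, $|\mu|=\sum_i\mu_i$ and $\|\mu\|=\sum_i i\mu_i$; a curve has tangency profile $\mu$ if it has exactly $\mu_i$ ends of weight $i$ for each $i$. $\mathcal{M}_{g,n}(\mathbb{T}M_\delta,(a,b),\mu)$ denotes the moduli space of genus $g$ parametrized tropical curves in $\mathbb{T}M_\delta$ of class $aE+bF$ with tangency profile $\mu$ and $n$ marked points on $\Gamma$; it is a polyhedral complex whose cells correspond to combinatorial types (the graph together with the slopes of $h$), a curve in a cell being parametrized by its edge lengths (including positions of marked points) and the image of a vertex. *)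

(* Defs.v *)
From HB Require Import structures.
From mathcomp Require Import all_boot all_order all_algebra.
From mathcomp Require Import reals.
Set Implicit Arguments. Unset Strict Implicit. Unset Printing Implicit Defensive.
Import Order.TTheory GRing.Theory Num.Theory.
Local Open Scope ring_scope.

Section Mobius.
Variable R : realType.
Variable delta : bool.
Variable l : R.

Definition phi (p : R * R) : R * R := (p.1 + l, (delta%:R) * p.1 - p.2).
Definition phi_inv (p : R * R) : R * R := (p.1 - l, (delta%:R) * (p.1 - l) - p.2).
Definition phi_iter (k : int) (p : R * R) : R * R :=
  match k with Posz m => iter m phi p | Negz m => iter m.+1 phi_inv p end.
End Mobius.

(* linear part of phi_delta acting on integer slopes: (sx,sy) |-> (sx, delta sx - sy);
   it is its own inverse *)
Definition linA (delta : bool) (s : int * int) : int * int :=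
  (s.1, (nat_of_bool delta)%:Z * s.1 - s.2).
Definition linA_iter (delta : bool) (k : int) (s : int * int) : int * int :=
  match k with Posz m => iter m (linA delta) s | Negz m => iter m.+1 (linA delta) s end.

(* Vertices 'I_nv, bounded edges 'I_ne (oriented src -> tgt), ends 'I_nend.
   Each vertex v has a chosen lift P_v in R^2 (a point of the cell).  A bounded
   edge e leaves the lift P_(src e) with slope [eslope e] (in the chart of R^2),
   and after length len_e reaches Q = P_(src e) + len_e * eslope e, with
   P_(tgt e) = phi^(twist e) Q.  An end j is a ray from P_(endv j) with slope
   [endslope j].  Marked point j lies in the interior of the bounded edge or end
   [mark j]. *)
Record ctype (n : nat) := CType {
  nv : nat; ne : nat; nend : nat;
  src : 'I_ne -> 'I_nv; tgt : 'I_ne -> 'I_nv;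
  eslope : 'I_ne -> int * int; twist : 'I_ne -> int;
  endv : 'I_nend -> 'I_nv; endslope : 'I_nend -> int * int;
  mark : 'I_n -> 'I_ne + 'I_nend }.
Arguments nv {n} c. Arguments ne {n} c. Arguments nend {n} c.
Arguments src {n} c _. Arguments tgt {n} c _. Arguments eslope {n} c _.
Arguments twist {n} c _. Arguments endv {n} c _. Arguments endslope {n} c _.
Arguments mark {n} c _.

Section Types.
Variable delta : bool.
Variable n : nat.
Variable T : ctype n.

(* outgoing slopes of all half-edges at v, in the chart of the lift P_v *)
Definition outgoing (v : 'I_(nv T)) : seq (int * int) :=
  [seq eslope T e | e <- enum 'I_(ne T) & src T e == v] ++
  [seq - linA_iter delta (twist T e) (eslope T e) | e <- enum 'I_(ne T) & tgt T e == v] ++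
  [seq endslope T j | j <- enum 'I_(nend T) & endv T j == v].

Definition adj : rel 'I_(nv T) := fun u v =>
  [exists e, ((src T e == u) && (tgt T e == v)) || ((src T e == v) && (tgt T e == u))].

Definition connected_type : Prop := forall u v, connect adj u v.

(* genus g = 1 - chi(Gamma) = #bounded edges - #vertices + 1 *)
Definition has_genus (g : nat) : Prop := (ne T + 1 = nv T + g)%N.

Definition balanced : Prop := forall v, \sum_(s <- outgoing v) s = 0.

Definition trivalent : Prop := forall v, size (outgoing v) = 3%N.

Definition pos_parallel (s t : int * int) : bool :=
  (s.1 * t.2 - s.2 * t.1 == 0) && (0 < s.1 * t.1 + s.2 * t.2).

(* h is an immersion (locally injective): no contracted edge, and at every
   vertex no two half-edges leave in the same direction *)
Definition immersion : Prop := forall v,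
  all (fun s => s != 0) (outgoing v) &&
  pairwise (fun s t => ~~ pos_parallel s t) (outgoing v).

Definition weight (s : int * int) : nat := gcdn `|s.1|%N `|s.2|%N.

Definition ends_vertical : Prop := forall j, (endslope T j).1 = 0.

(* tangency profile mu, given as mu = [:: mu_1; mu_2; ...] (multiplicities) *)
Definition has_profile (mu : seq nat) : Prop :=
  forall i : nat, (0 < i)%N ->
    #|[pred j : 'I_(nend T) | weight (endslope T j) == i]| = nth 0%N mu i.-1.

End Types.

Definition mu_card (mu : seq nat) : nat := sumn mu.
Definition mu_norm (mu : seq nat) : nat := \sum_(i < size mu) (i.+1 * nth 0%N mu i)%N.

Definition simple_type (delta : bool) (g n : nat) (mu : seq nat) (T : ctype n) : Prop :=
  [/\ connected_type T, has_genus T g, balanced delta T, trivalent delta T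
    & [/\ immersion delta T, ends_vertical T & has_profile T mu]].

Section Cells.
Variable R : realType.
Variable delta : bool.
Variable l : R.
Variable n : nat.
Variable T : ctype n.

(* a point of the parameter space: x- and y-coordinates of the vertex lifts,
   lengths of bounded edges, positions of marked points on their edges *)
Definition cellpt : lmodType R :=
  (('rV[R]_(nv T) * 'rV[R]_(nv T)) * ('rV[R]_(ne T) * 'rV[R]_n))%type.

Definition vpos (X : cellpt) (v : 'I_(nv T)) : R * R :=
  (X.1.1 ord0 v, X.1.2 ord0 v).
Definition elen (X : cellpt) (e : 'I_(ne T)) : R := X.2.1 ord0 e.
Definition mpos (X : cellpt) (j : 'I_n) : R := X.2.2 ord0 j.

Definition in_cell (X : cellpt) : Prop :=
  [/\ forall e, 0 < elen X e,
      forall e, vpos X (tgt T e) =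
        phi_iter delta l (twist T e)
          ((vpos X (src T e)).1 + elen X e * ((eslope T e).1)%:~R,
           (vpos X (src T e)).2 + elen X e * ((eslope T e).2)%:~R)
    & forall j, match mark T j with
                | inl e => 0 < mpos X j < elen X e
                | inr _ => 0 < mpos X j end].

Definition is_intR (x : R) : Prop := exists m : int, x = m%:~R.

(* c is generic: the fiber {x = c} contains no image of a vertex *)
Definition generic_fiber (X : cellpt) (c : R) : Prop :=
  forall v, ~ is_intR (((vpos X v).1 - c) / l).

(* number of times the (lift of the) bounded edge e crosses the fiber over c,
   i.e. #{m in Z | c + m l strictly between the x-coordinates of its endpoints},
   valid for generic c *)
Definition crossings (X : cellpt) (e : 'I_(ne T)) (c : R) : int :=
  let x0 := (vpos X (src T e)).1 in
  let x1 := x0 + elen X e * ((eslope T e).1)%:~R in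
  `| Num.floor ((x1 - c) / l) - Num.floor ((x0 - c) / l) |.

(* tropical intersection number with the fiber over generic c
   (ends are vertical, hence do not meet generic fibers) *)
Definition fiber_int (X : cellpt) (c : R) : int :=
  \sum_(e < ne T) `|(eslope T e).1| * crossings X e c.

(* class aE + bF with a2 = 2a, b2 = 2b *)
Definition has_class (a2 b2 : int) (X : cellpt) : Prop :=
  [/\ ends_vertical T,
      (\sum_(j < nend T) weight (endslope T j))%:Z = b2
    & forall c, generic_fiber X c -> fiber_int X c = a2].

Definition locus (a2 b2 : int) (X : cellpt) : Prop := in_cell X /\ has_class a2 b2 X.

End Cells.

Definition aff_indep (R : realType) (V : lmodType R) (d : nat)
    (p : 'I_d.+1 -> V) : Prop :=
  forall c : 'I_d -> R,
    \sum_(i < d) c i *: (p (lift ord0 i) - p ord0) = 0 -> forall i, c i = 0.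

Definition has_dim (R : realType) (V : lmodType R) (X : V -> Prop) (d : nat) : Prop :=
  (exists p : 'I_d.+1 -> V, (forall i, X (p i)) /\ aff_indep p) /\
  (forall p : 'I_d.+2 -> V, (forall i, X (p i)) -> ~ aff_indep p).

Arguments locus {R} delta l {n} T a2 b2 X.
Arguments cellpt R {n} T.

(* Main.v *)
Require Import Defs.
From HB Require Import structures.
From mathcomp Require Import all_boot all_order all_algebra.
From mathcomp Require Import reals.
From mathcomp Require Import ring lra zify.
Set Implicit Arguments. Unset Strict Implicit. Unset Printing Implicit Defensive.
Import Order.TTheory GRing.Theory Num.Theory.
Local Open Scope ring_scope.

Definition podd (t : int) : bool := match t with Posz m => odd m | Negz m => ~~ odd m end.

Definition Ay (R : pzRingType) (delta : bool) (b : bool) (p : R * R) : R :=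
  if b then delta%:R * p.1 - p.2 else p.2.

Section Phi.
Variable R : realType.
Variable delta : bool.
Variable l : R.

Lemma iter_phi m p : iter m (phi delta l) p =
  (p.1 + m%:R * l, Ay delta (odd m) p + (iter m (phi delta l) (0,0)).2).
Proof.
elim: m p => [|m IH] p; first by rewrite /= mul0r addr0; case: p => x y /=; rewrite addr0.
rewrite iterS IH [in RHS]iterS [iter m _ (0,0)]IH /phi /Ay /=.
case: (odd m) => /=; rewrite -?natr1 ?mulrDl; congr (_,_); ring.
Qed.

Lemma iter_phi_inv m p : iter m (phi_inv delta l) p =
  (p.1 - m%:R * l, Ay delta (odd m) p + (iter m (phi_inv delta l) (0,0)).2).
Proof.
elim: m p => [|m IH] p; first by rewrite /= mul0r subr0; case: p => x y /=; rewrite addr0.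
rewrite iterS IH [in RHS]iterS [iter m _ (0,0)]IH /phi_inv /Ay /=.
case: (odd m) => /=; rewrite -?natr1 ?mulrDl; congr (_,_); ring.
Qed.

Lemma Ay0 b : Ay delta b (0 : R,0 : R) = 0.
Proof. by case: b; rewrite /Ay /= ?mulr0 ?subr0. Qed.

Lemma phi_iter_form t p : phi_iter delta l t p =
  (p.1 + t%:~R * l, Ay delta (podd t) p + (phi_iter delta l t (0,0)).2).
Proof.
case: t => m; rewrite /phi_iter.
  by rewrite iter_phi [in RHS]iter_phi /= Ay0 add0r.
rewrite iter_phi_inv [in RHS]iter_phi_inv /= Ay0 add0r NegzE.
congr (_, _).
by rewrite mulrNz mulNr.
Qed.
End Phi.

Lemma row_free_of (F : fieldType) m n (A : 'M[F]_(m, n)) :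
  (forall v : 'rV_m, v *m A = 0 -> v = 0) -> row_free A.
Proof.
move=> H; rewrite -kermx_eq0; apply/eqP/row_matrixP => i.
rewrite row0; apply: H; by rewrite -row_mul mulmx_ker row0.
Qed.

Section Lin.
Variable R : realType.
Variable delta : bool.
Variable l : R.
Variable n : nat.
Variable T : ctype n.


Definition s1R (e : 'I_(ne T)) : R := ((eslope T e).1)%:~R.
Definition s2R (e : 'I_(ne T)) : R := ((eslope T e).2)%:~R.

Definition fx (X : cellpt R T) e : R :=
  (vpos X (tgt T e)).1 - ((vpos X (src T e)).1 + elen X e * s1R e).
Definition fy (X : cellpt R T) e : R :=
  (vpos X (tgt T e)).2 - Ay delta (podd (twist T e))
     ((vpos X (src T e)).1 + elen X e * s1R e, (vpos X (src T e)).2 + elen X e * s2R e).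

Lemma fx_lin a X Y e : fx (a *: X + Y) e = a * fx X e + fx Y e.
Proof. rewrite /fx /vpos /elen /= !mxE; ring. Qed.
Lemma fy_lin a X Y e : fy (a *: X + Y) e = a * fy X e + fy Y e.
Proof. rewrite /fy /Ay /vpos /elen /= !mxE; case: podd => /=; ring. Qed.

Definition Dd := ((nv T + nv T) + (ne T + n))%N.
Definition Ed := (ne T + ne T)%N.

Definition vec (X : cellpt R T) : 'rV[R]_Dd :=
  row_mx (row_mx X.1.1 X.1.2) (row_mx X.2.1 X.2.2).
Definition unvec (u : 'rV[R]_Dd) : cellpt R T :=
  ((lsubmx (lsubmx u), rsubmx (lsubmx u)), (lsubmx (rsubmx u), rsubmx (rsubmx u))).

Lemma unvecK X : unvec (vec X) = X.
Proof. rewrite /unvec /vec !row_mxKl !row_mxKr !row_mxKl. by case: X => [[]] ? ? []. Qed.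
Lemma vecK u : vec (unvec u) = u.
Proof. by rewrite /unvec /vec !hsubmxK. Qed.
Lemma vec_lin a X Y : vec (a *: X + Y) = a *: vec X + vec Y.
Proof.
case: X => [[x1 x2] [x3 x4]]; case: Y => [[y1 y2] [y3 y4]].
by rewrite /vec /= !scale_row_mx !add_row_mx.
Qed.
Lemma vec_inj : injective vec.
Proof. exact: can_inj unvecK. Qed.
Lemma unvec_lin a u v : unvec (a *: u + v) = a *: unvec u + unvec v.
Proof. apply: vec_inj; by rewrite vec_lin !vecK. Qed.

Definition fcell (X : cellpt R T) : 'rV[R]_Ed :=
  row_mx (\row_e fx X e) (\row_e fy X e).
Lemma fcell_lin a X Y : fcell (a *: X + Y) = a *: fcell X + fcell Y.
Proof.
rewrite /fcell scale_row_mx add_row_mx; congr row_mx; apply/rowP => e;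
  by rewrite !mxE ?fx_lin ?fy_lin.
Qed.

Definition Fu (u : 'rV[R]_Dd) : 'rV[R]_Ed := fcell (unvec u).
Lemma Fu_lin : linear Fu.
Proof. by move=> a u v; rewrite /Fu unvec_lin fcell_lin. Qed.
Definition FuL : {linear 'rV[R]_Dd -> 'rV[R]_Ed} :=
  HB.pack Fu (GRing.isLinear.Build _ _ _ _ Fu Fu_lin).
Definition Mx : 'M[R]_(Dd, Ed) := lin1_mx FuL.
Lemma MxE u : u *m Mx = fcell (unvec u).
Proof. by rewrite /Mx mul_rV_lin1. Qed.

End Lin.

Section Eqs.
Variable R : realType.
Variable delta : bool.
Variable l : R.
Variable n : nat.
Variable T : ctype n.

Definition kap (t : int) : R := (phi_iter delta l t (0,0)).2.

Lemma edge_eq_iff (X : cellpt R T) e :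
  vpos X (tgt T e) = phi_iter delta l (twist T e)
          ((vpos X (src T e)).1 + elen X e * ((eslope T e).1)%:~R,
           (vpos X (src T e)).2 + elen X e * ((eslope T e).2)%:~R)
  <-> (fx X e = (twist T e)%:~R * l /\ fy delta X e = kap (twist T e)).
Proof.
rewrite phi_iter_form /fx /fy /kap /s1R /s2R /vpos /=.
split.
  by case=> -> ->; split; ring.
case=> h1 h2; congr (_, _); [rewrite -h1 | rewrite -h2]; ring.
Qed.

Definition tau : 'rV[R]_(Ed T) :=
  row_mx (\row_e ((twist T e)%:~R * l)) (\row_e kap (twist T e)).

Lemma eqs_iff (X : cellpt R T) :
  (forall e, vpos X (tgt T e) = phi_iter delta l (twist T e)
          ((vpos X (src T e)).1 + elen X e * ((eslope T e).1)%:~R,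
           (vpos X (src T e)).2 + elen X e * ((eslope T e).2)%:~R))
  <-> fcell delta X = tau.
Proof.
split.
  move=> H; rewrite /fcell /tau; congr row_mx; apply/rowP => e; rewrite !mxE;
  by case: (proj1 (edge_eq_iff X e) (H e)).
move=> H e; apply/edge_eq_iff; move: H; rewrite /fcell /tau => /eq_row_mx [h1 h2].
split.
  by move/rowP: h1 => /(_ e); rewrite !mxE.
by move/rowP: h2 => /(_ e); rewrite !mxE.
Qed.

End Eqs.

Lemma sq_pos (x y : int) : ~ (x = 0 /\ y = 0) -> 0 < x * x + y * y.
Proof. nia. Qed.

Lemma det_ne0_aux (a b c d : int) :
  ~ (a = 0 /\ b = 0) -> ~ (c = 0 /\ d = 0) -> ~ (a + c = 0 /\ b + d = 0) ->
  a * c + b * d <= 0 -> a * (a + c) + b * (b + d) >= 0 -> c * (a + c) + d * (b + d) >= 0 ->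
  a * d - b * c != 0.
Proof.
move=> h1 h2 h3 p12 p13 p23; apply/negP => /eqP hd.
have e1 : (a * c + b * d) * (a * c + b * d) = (a * a + b * b) * (c * c + d * d).
  have : (a * c + b * d) * (a * c + b * d) + (a * d - b * c) * (a * d - b * c) = (a * a + b * b) * (c * c + d * d) by ring.
  by rewrite hd mul0r addr0.
have n1 := sq_pos h1.
have n2 := sq_pos h2.
have n3 := sq_pos h3.
set p := a * c + b * d in p12 e1 p13 p23.
set N1 := a * a + b * b in e1 n1 p13.
set N2 := c * c + d * d in e1 n2 p23.
have E3 : (a+c) * (a+c) + (b+d) * (b+d) = N1 + N2 + 2 * p by rewrite /N1 /N2 /p; ring.
have q1 : p + N1 >= 0 by rewrite /p /N1; nia.
have q2 : p + N2 >= 0 by rewrite /p /N2; nia.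
nia.
Qed.

Lemma pair_ne0 (x y : int) : (x, y) != 0 -> ~ (x = 0 /\ y = 0).
Proof. by move=> h [hx hy]; move: h; rewrite hx hy eqxx. Qed.

Lemma det_ne0 (a1 b1 a2 b2 a3 b3 : int) :
  a1 + a2 + a3 = 0 -> b1 + b2 + b3 = 0 ->
  (a1, b1) != 0 -> (a2, b2) != 0 -> (a3, b3) != 0 ->
  ~~ pos_parallel (a1, b1) (a2, b2) -> ~~ pos_parallel (a1, b1) (a3, b3) ->
  ~~ pos_parallel (a2, b2) (a3, b3) -> a1 * b2 - b1 * a2 != 0.
Proof.
move=> sa sb /pair_ne0 h1 /pair_ne0 h2 /pair_ne0 h3.
have ea3 : a3 = - (a1 + a2) by lia.
have eb3 : b3 = - (b1 + b2) by lia.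
rewrite /pos_parallel /= ea3 eb3 => p12 p13 p23.
apply/negP => /eqP hd.
have h3' : ~ (a1 + a2 = 0 /\ b1 + b2 = 0).
  by move=> [x y]; apply: h3; rewrite ea3 eb3 x y oppr0.
have := @det_ne0_aux a1 b1 a2 b2 h1 h2 h3'.
have d13 : a1 * - (b1 + b2) - b1 * - (a1 + a2) = 0 by nia.
have d23 : a2 * - (b1 + b2) - b2 * - (a1 + a2) = 0 by nia.
move: p12 p13 p23; rewrite hd d13 d23 eqxx /= -!leNgt => p12 p13 p23.
move=> H; suff : false by []; apply: H => //; nia.
Qed.


Lemma perp_form (R : realFieldType) (x y : int) (z : R * R) :
  (x, y) != 0 -> z.1 * x%:~R + z.2 * y%:~R = 0 ->
  exists c : R, z = (- c * y%:~R, c * x%:~R).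
Proof.
move=> /pair_ne0 h hz.
have np : (x * x + y * y)%:~R != 0 :> R.
  by rewrite intr_eq0 gt_eqF // sq_pos.
rewrite intrD !intrM in np.
exists ((z.2 * x%:~R - z.1 * y%:~R) / (x%:~R * x%:~R + y%:~R * y%:~R)).
case: z hz np => z1 z2 /= hz np; congr (_, _).
  apply: (mulIf np); rewrite !mulNr mulrAC divfK //.
  apply/eqP; rewrite -subr_eq0; apply/eqP.
  have -> : z1 * (x%:~R * x%:~R + y%:~R * y%:~R) - - ((z2 * x%:~R - z1 * y%:~R) * y%:~R)
     = x%:~R * (z1 * x%:~R + z2 * y%:~R) by ring.
  by rewrite hz mulr0.
apply: (mulIf np); rewrite mulrAC divfK //.
apply/eqP; rewrite -subr_eq0; apply/eqP.
have -> : z2 * (x%:~R * x%:~R + y%:~R * y%:~R) - ((z2 * x%:~R - z1 * y%:~R) * x%:~R)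
   = y%:~R * (z1 * x%:~R + z2 * y%:~R) by ring.
by rewrite hz mulr0.
Qed.

Lemma three_core (R : realFieldType) (a1 b1 a2 b2 a3 b3 : int) (z1 z2 z3 : R * R) :
  a1 + a2 + a3 = 0 -> b1 + b2 + b3 = 0 ->
  (a1, b1) != 0 -> (a2, b2) != 0 -> (a3, b3) != 0 ->
  ~~ pos_parallel (a1, b1) (a2, b2) -> ~~ pos_parallel (a1, b1) (a3, b3) ->
  ~~ pos_parallel (a2, b2) (a3, b3) ->
  z1.1 * a1%:~R + z1.2 * b1%:~R = 0 ->
  z2.1 * a2%:~R + z2.2 * b2%:~R = 0 ->
  z3.1 * a3%:~R + z3.2 * b3%:~R = 0 ->
  z1.1 + z2.1 + z3.1 = 0 -> z1.2 + z2.2 + z3.2 = 0 ->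
  exists c : R, [/\ z1 = (- c * b1%:~R, c * a1%:~R), z2 = (- c * b2%:~R, c * a2%:~R)
                  & z3 = (- c * b3%:~R, c * a3%:~R)].
Proof.
move=> sa sb n1 n2 n3 p12 p13 p23 q1 q2 q3 s1 s2.
have hdet := det_ne0 sa sb n1 n2 n3 p12 p13 p23.
have [c1 e1] := perp_form n1 q1.
have [c2 e2] := perp_form n2 q2.
have [c3 e3] := perp_form n3 q3.
have ea3 : a3 = - (a1 + a2) by lia.
have eb3 : b3 = - (b1 + b2) by lia.
move: s1 s2; rewrite e1 e2 e3 /= ea3 eb3 !intrN !intrD => s1 s2.
have hd : (a1%:~R * b2%:~R - b1%:~R * a2%:~R : R) != 0.
  by rewrite -!intrM -intrB intr_eq0.
have E1 : (c1 - c3) * (a1%:~R * b2%:~R - b1%:~R * a2%:~R) = 0.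
  have -> : (c1 - c3) * (a1%:~R * b2%:~R - b1%:~R * a2%:~R) =
     b2%:~R * (c1 * a1%:~R + c2 * a2%:~R + c3 * - (a1%:~R + a2%:~R))
     + a2%:~R * (- c1 * b1%:~R + - c2 * b2%:~R + - c3 * - (b1%:~R + b2%:~R)) by ring.
  by rewrite s1 s2 !mulr0 addr0.
have E2 : (c2 - c3) * (a1%:~R * b2%:~R - b1%:~R * a2%:~R) = 0.
  have -> : (c2 - c3) * (a1%:~R * b2%:~R - b1%:~R * a2%:~R) =
     - b1%:~R * (c1 * a1%:~R + c2 * a2%:~R + c3 * - (a1%:~R + a2%:~R))
     - a1%:~R * (- c1 * b1%:~R + - c2 * b2%:~R + - c3 * - (b1%:~R + b2%:~R)) by ring.
  by rewrite s1 s2 !mulr0 subr0.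
move/eqP: E1; rewrite mulf_eq0 (negbTE hd) orbF subr_eq0 => /eqP E1.
move/eqP: E2; rewrite mulf_eq0 (negbTE hd) orbF subr_eq0 => /eqP E2.
exists c3; rewrite E1 E2; split => //.
Qed.

Lemma sum_delta (R : pzRingType) (I : finType) (i0 : I) (G : I -> R) :
  \sum_i (i == i0)%:R * G i = G i0.
Proof.
rewrite (bigD1 i0) //= eqxx mul1r big1 ?addr0 // => i /negbTE ->; by rewrite mul0r.
Qed.

Lemma sum_cond (R : pzRingType) (I : finType) (P : pred I) (G : I -> R) :
  \sum_(i | P i) G i = \sum_i (P i)%:R * G i.
Proof. by rewrite big_mkcond; apply: eq_bigr => i _; case: (P i); rewrite ?mul1r ?mul0r. Qed.

Lemma sum_fe (R : nmodType) (I : finType) (P : pred I) (F : I -> R) :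
  \sum_(x <- [seq x <- enum I | P x]) F x = \sum_(x | P x) F x.
Proof. by rewrite big_filter big_enum_cond. Qed.

Lemma linA_iter_form delta t s :
  linA_iter delta t s = if podd t then linA delta s else s.
Proof.
have inv : forall s, linA delta (linA delta s) = s.
  by move=> [a b]; rewrite /linA /=; congr (_,_); ring.
have it : forall m, iter m (linA delta) s = if odd m then linA delta s else s.
  elim=> [|m IH] //=; rewrite IH; case: (odd m) => //=.
by case: t => m //=; rewrite -/(iter m _ _) it /=; case: (odd m).
Qed.

Lemma linA_iter_cast (R : realType) delta t (s : int * int) :
  ((linA_iter delta t s).1%:~R : R) = s.1%:~R /\
  ((linA_iter delta t s).2%:~R : R) = Ay delta (podd t) (s.1%:~R, s.2%:~R).
Proof.
rewrite linA_iter_form /Ay; case: podd => //=; split => //.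
by rewrite intrB intrM; case: delta.
Qed.

Section Stress.
Variable R : realType.
Variable delta : bool.
Variable n : nat.
Variable T : ctype n.
Variable v : 'rV[R]_(Ed T).
Hypothesis Hv : v *m (Mx R delta T)^T = 0.

Let w1 e := v 0 (lshift (ne T) e).
Let w2 e := v 0 (rshift (ne T) e).

Lemma sum_rel (X : cellpt R T) : \sum_e (fx X e * w1 e + fy delta X e * w2 e) = 0.
Proof.
have H : (vec X *m Mx R delta T) *m v^T = 0.
  by rewrite -mulmxA -[Mx _ _ _]trmxK -trmx_mul Hv trmx0 mulmx0.
rewrite MxE unvecK in H.
move/matrixP: H => /(_ 0 0); rewrite !mxE big_split_ord /= => H.
rewrite big_split /=; rewrite -[RHS]H; congr (_ + _); apply: eq_bigr => e _;
  by rewrite /fcell ?row_mxEl ?row_mxEr !mxE.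
Qed.


Definition zs e : R * R :=
  if podd (twist T e) then (- (w1 e + delta%:R * w2 e), w2 e) else (- w1 e, - w2 e).
Definition zt e : R * R := (w1 e, w2 e).

Lemma S1 e0 : w1 e0 * s1R R e0 + w2 e0 * Ay delta (podd (twist T e0)) (s1R R e0, s2R R e0) = 0.
Proof.
pose X : cellpt R T := ((0, 0), (\row_e ((e == e0)%:R : R), 0)).
have := sum_rel X.
rewrite (eq_bigr (fun e => (e == e0)%:R * (-(w1 e * s1R R e + w2 e * Ay delta (podd (twist T e)) (s1R R e, s2R R e))))); last first.
  move=> e _; rewrite /fx /fy /vpos /elen /X /= !mxE.
  by case: (e == e0); case: podd; rewrite /Ay /=; ring.
by rewrite sum_delta => /eqP; rewrite oppr_eq0 => /eqP.
Qed.


Lemma S2 v0 : \sum_(e | src T e == v0) (zs e).1 + \sum_(e | tgt T e == v0) (zt e).1 = 0.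
Proof.
pose X : cellpt R T := ((\row_u ((u == v0)%:R : R), 0), (0, 0)).
rewrite (sum_cond (fun e => src T e == v0)) (sum_cond (fun e => tgt T e == v0)) -big_split -[RHS](sum_rel X); apply: eq_bigr => e _.
rewrite /fx /fy /vpos /elen /X /zs /zt /= !mxE.
by case: (src T e == v0); case: (tgt T e == v0); case: podd; rewrite /Ay /=; ring.
Qed.

Lemma S3 v0 : \sum_(e | src T e == v0) (zs e).2 + \sum_(e | tgt T e == v0) (zt e).2 = 0.
Proof.
pose X : cellpt R T := ((0, \row_u ((u == v0)%:R : R)), (0, 0)).
rewrite (sum_cond (fun e => src T e == v0)) (sum_cond (fun e => tgt T e == v0)) -big_split -[RHS](sum_rel X); apply: eq_bigr => e _.
rewrite /fx /fy /vpos /elen /X /zs /zt /= !mxE.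
by case: (src T e == v0); case: (tgt T e == v0); case: podd; rewrite /Ay /=; ring.
Qed.

Definition PL u : seq ((int * int) * (R * R)) :=
  [seq (eslope T e, zs e) | e <- enum 'I_(ne T) & src T e == u] ++
  [seq (- linA_iter delta (twist T e) (eslope T e), zt e) | e <- enum 'I_(ne T) & tgt T e == u] ++
  [seq (endslope T j, (0 : R, 0 : R)) | j <- enum 'I_(nend T) & endv T j == u].

Lemma PL_fst u : map fst (PL u) = outgoing delta u.
Proof. by rewrite /PL !map_cat -!map_comp. Qed.

Lemma PL_perp u p : p \in PL u -> p.2.1 * (p.1.1)%:~R + p.2.2 * (p.1.2)%:~R = 0.
Proof.
rewrite /PL !mem_cat => /orP [|/orP []] /mapP [x _ ->] /=.
- move: (S1 x); rewrite /zs /Ay /s1R /s2R; case: podd => /= h;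
  by rewrite -[RHS]oppr0 -h; ring.
- have [c1 c2] := linA_iter_cast R delta (twist T x) (eslope T x).
  rewrite !intrN c1 c2 /zt; move: (S1 x); rewrite /s1R /s2R => h.
  by rewrite -[RHS]oppr0 -h; ring.
- by rewrite !mul0r addr0.
Qed.

Lemma PL_sum1 u : \sum_(p <- PL u) p.2.1 = 0.
Proof.
rewrite /PL !big_cat !big_map !sum_fe /= [X in _ + (_ + X)]big1 ?addr0 //; exact: S2.
Qed.

Lemma PL_sum2 u : \sum_(p <- PL u) p.2.2 = 0.
Proof.
rewrite /PL !big_cat !big_map !sum_fe /= [X in _ + (_ + X)]big1 ?addr0 //; exact: S3.
Qed.


Hypothesis Hbal : balanced delta T.
Hypothesis Himm : immersion delta T.
Hypothesis Htri : trivalent delta T.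

Lemma PL_three u : exists c : R, forall p, p \in PL u ->
  p.2 = (- c * (p.1.2)%:~R, c * (p.1.1)%:~R).
Proof.
have hs : size (PL u) = 3%N by rewrite -(size_map fst) PL_fst Htri.
have hb := Hbal u. have hi := Himm u. rewrite -PL_fst in hb hi.
have hp := @PL_perp u. have h1 := PL_sum1 u. have h2 := PL_sum2 u.
move: hs hb hi hp h1 h2.
case: (PL u) => [|[[a1 b1] z1] [|[[a2 b2] z2] [|[[a3 b3] z3] []]]] //= _.
rewrite !big_cons !big_nil /= => hb.
have sa : a1 + a2 + a3 = 0 by move: (congr1 fst hb) => /=; rewrite addr0 addrA.
have sb : b1 + b2 + b3 = 0 by move: (congr1 snd hb) => /=; rewrite addr0 addrA.
rewrite !andbT => /and3P [/and3P [n1 n2 n3] /andP [p12 p13] p23] hp.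
rewrite !addr0 !addrA => s1 s2.
have q1 := hp _ (mem_head _ _).
have q2 : z2.1 * a2%:~R + z2.2 * b2%:~R = 0 by apply: (hp (a2, b2, z2)); rewrite !inE eqxx ?orbT.
have q3 : z3.1 * a3%:~R + z3.2 * b3%:~R = 0 by apply: (hp (a3, b3, z3)); rewrite !inE eqxx ?orbT.
have [c [e1 e2 e3]] := three_core sa sb n1 n2 n3 p12 p13 p23 q1 q2 q3 s1 s2.
exists c => p; rewrite !inE => /or3P [] /eqP -> //=.
Qed.


Definition good u := forall p, p \in PL u -> p.2 = (0 : R, 0 : R).

Lemma PL_nz u p : p \in PL u -> p.1 != 0.
Proof.
move=> hin; move: (Himm u) => /andP [/allP H _]; apply: H.
by rewrite -PL_fst; apply: map_f.
Qed.

Lemma good_of u o : (o, (0 : R, 0 : R)) \in PL u -> good u.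
Proof.
case: o => o1 o2 hin; have no := PL_nz hin.
have [c hc] := PL_three u.
have := hc _ hin => /= [[h1 h2]].
have c0 : c = 0.
  have [o10|o1n0] := eqVneq o1 0.
    have o2n0 : o2 != 0 by move: no; rewrite o10; apply: contra => /eqP ->.
    move/esym/eqP: h1; rewrite mulNr oppr_eq0 mulf_eq0 intr_eq0 (negbTE o2n0) orbF.
    by move/eqP.
  move/esym/eqP: h2; rewrite mulf_eq0 intr_eq0 (negbTE o1n0) orbF.
  by move/eqP.
rewrite /good => p /hc ->. by rewrite c0 oppr0 !mul0r.
Qed.

Lemma in_src e : (eslope T e, zs e) \in PL (src T e).
Proof.
rewrite /PL !mem_cat; apply/orP; left; apply/mapP; exists e => //.
by rewrite mem_filter eqxx mem_enum.
Qed.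

Lemma in_tgt e : (- linA_iter delta (twist T e) (eslope T e), zt e) \in PL (tgt T e).
Proof.
rewrite /PL !mem_cat; apply/orP; right; apply/orP; left; apply/mapP; exists e => //.
by rewrite mem_filter eqxx mem_enum.
Qed.

Lemma zs0 e : (zs e = (0, 0)) <-> (zt e = (0, 0)).
Proof.
rewrite /zs /zt; case: podd; split; case=> h1 h2; congr (_, _);
  first [ by [] | by rewrite ?h1 ?h2 ?mulr0 ?addr0 ?oppr0
        | by apply/eqP; rewrite -oppr_eq0 ?h1 ?h2
        | by move/eqP: h1; rewrite h2 mulr0 addr0 oppr_eq0 => /eqP ].
Qed.

Lemma good_edge e : good (src T e) <-> good (tgt T e).
Proof.
split => g.
  have hz : zt e = (0, 0) by apply/zs0; exact: g _ (in_src e).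
  apply: (@good_of _ (- linA_iter delta (twist T e) (eslope T e))).
  rewrite -hz; exact: in_tgt.
have hz : zs e = (0, 0) by apply/zs0; exact: g _ (in_tgt e).
apply: (@good_of _ (eslope T e)).
rewrite -hz; exact: in_src.
Qed.

Lemma good_connect u w : connect (@adj _ T) u w -> good u -> good w.
Proof.
move/connectP => [p hp ->]; elim: p u hp => [|x p IH] u //= /andP [hux hp] gu.
apply: IH hp _; move: hux => /existsP [e /orP [] /andP [/eqP hs /eqP ht]].
  by rewrite -ht; apply/good_edge; rewrite hs.
by rewrite -hs; apply/good_edge; rewrite ht.
Qed.

Lemma stress_zero : connected_type T -> (0 < nend T)%N -> v = 0.
Proof.
move=> Hcon Hend.
pose j := Ordinal Hend.
have gj : good (endv T j).
  apply: (@good_of _ (endslope T j)).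
  rewrite /PL !mem_cat; apply/orP; right; apply/orP; right; apply/mapP; exists j => //.
  by rewrite mem_filter eqxx mem_enum.
have gall : forall w, good w by move=> w; apply: (good_connect (Hcon _ _) gj).
have z e : zt e = (0, 0) by apply: (gall (tgt T e)) (in_tgt e).
apply/rowP => k; rewrite mxE; case: (split_ordP k) => e ->.
  by have := z e; case.
by have := z e; case.
Qed.

End Stress.

Close Scope ring_scope.

Lemma size_fe (I : finType) (P : pred I) (A : Type) (f : I -> A) :
  size [seq f e | e <- enum I & P e] = (\sum_(e | P e) 1)%N.
Proof. by rewrite size_map -sum1_size big_filter big_enum_cond. Qed.

Lemma part_card (I J : finType) (f : I -> J) :
  (\sum_(j : J) \sum_(i | f i == j) 1 = #|I|)%N.
Proof. by rewrite -sum1_card (partition_big f xpredT). Qed.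

Section Comb.
Variable delta : bool.
Variable n : nat.
Variable T : ctype n.

Lemma count3 : trivalent delta T -> (3 * nv T = 2 * ne T + nend T)%N.
Proof.
move=> Htri.
have : (\sum_(v : 'I_(nv T)) size (outgoing delta v) = \sum_(v : 'I_(nv T)) 3)%N.
  by apply: eq_bigr => v _; rewrite Htri.
rewrite sum_nat_const card_ord mulnC => <-.
rewrite /outgoing.
under eq_bigr => v _ do rewrite !size_cat !size_fe.
by rewrite !big_split /= !part_card !card_ord; lia.
Qed.

Lemma sumn_nth (s : seq nat) : sumn s = (\sum_(i < size s) nth 0%N s i)%N.
Proof. by rewrite sumnE (big_nth 0%N) big_mkord. Qed.

Lemma count_ends (mu : seq nat) : immersion delta T -> has_profile T mu ->
  nend T = mu_card mu.
Proof.
move=> Himm Hpro.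
rewrite /mu_card sumn_nth.
have E : forall i : 'I_(size mu), nth 0%N mu i = (\sum_(j : 'I_(nend T) | weight (endslope T j) == i.+1) 1)%N.
  move=> i; rewrite -(Hpro i.+1) //= sum1_card; apply: eq_card => j //.
under eq_bigr => i _ do rewrite E.
rewrite (exchange_big_dep xpredT) //=.
rewrite -[LHS]card_ord -sum1_card; apply: eq_bigr => j _.
have wpos : (0 < weight (endslope T j))%N.
  rewrite /weight gcdn_gt0.
  have : endslope T j != 0%R.
    move: (Himm (endv T j)) => /andP [/allP H _]; apply: H.
    rewrite /outgoing !mem_cat; apply/orP; right; apply/orP; right; apply: map_f; by rewrite mem_filter eqxx mem_enum.
  case: (endslope T j) => a b /= h; apply: contraR h; rewrite negb_or -!leqNgt !leqn0 !absz_eq0 => /andP [/eqP -> /eqP ->] //.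
have wle : (weight (endslope T j) <= size mu)%N.
  rewrite leqNgt; apply/negP => hlt.
  have := Hpro _ wpos; rewrite nth_default; last by lia.
  move/eqP; rewrite -leqn0 leqNgt => /negP; apply.
  by apply/card_gt0P; exists j; rewrite inE.
have kl : ((weight (endslope T j)).-1 < size mu)%N by lia.
pose k : 'I_(size mu) := Ordinal kl.
rewrite (bigD1 k) /=; last by rewrite prednK.
rewrite big1 // => i /andP [/eqP hw hik].
have ik : i = k by apply: ord_inj; rewrite /= hw.
by rewrite ik eqxx in hik.
Qed.
End Comb.

Local Open Scope ring_scope.

Lemma sum_fst (I : Type) (r : seq I) (F : I -> int * int) :
  (\sum_(i <- r) F i).1 = \sum_(i <- r) (F i).1.
Proof. by elim: r => [|x r IH]; rewrite ?big_nil ?big_cons //= IH. Qed.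

Lemma abs_prod (s d : int) : (0 <= s -> 0 <= d) -> (s <= 0 -> d <= 0) -> `|s| * `|d| = s * d.
Proof. lia. Qed.

Lemma floor_sub_int (R : realType) (y : R) (t : int) :
  Num.floor (y - t%:~R) = Num.floor y - t.
Proof. by rewrite floorDrz ?rpredN ?intr_int // -intrN intrKfloor. Qed.

Section Fiber.
Variable R : realType.
Variable delta : bool.
Variable l : R.
Variable n : nat.
Variable T : ctype n.
Hypothesis lpos : 0 < l.
Hypothesis Hbal : balanced delta T.
Hypothesis Hvert : ends_vertical T.

Lemma bal_x v : \sum_(e | src T e == v) (eslope T e).1 - \sum_(e | tgt T e == v) (eslope T e).1 = 0.
Proof.
have := congr1 fst (Hbal v); rewrite sum_fst /outgoing !big_cat !big_map !sum_fe /=.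
rewrite [X in _ + (_ + X)]big1 ?addr0; last by move=> j _; rewrite Hvert.
move=> H; rewrite -[RHS]H; congr (_ + _); rewrite -sumrN; apply: eq_bigr => e _.
by rewrite linA_iter_form; case: podd.
Qed.

Lemma fiber_const (X : cellpt R T) c : in_cell delta l X ->
  fiber_int l X c = - \sum_e (eslope T e).1 * twist T e.
Proof.
case=> Hlen Heq _.
pose F v := Num.floor (((vpos X v).1 - c) / l).
have cr : forall e, `|(eslope T e).1| * crossings l X e c =
   (eslope T e).1 * (F (tgt T e) - twist T e - F (src T e)).
  move=> e; rewrite /crossings /=.
  have [h1 _] := proj1 (edge_eq_iff delta l X e) (Heq e).
  move: h1; rewrite /fx /s1R => h1.
  have ex : (vpos X (src T e)).1 + elen X e * ((eslope T e).1)%:~R =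
            (vpos X (tgt T e)).1 - (twist T e)%:~R * l by rewrite -h1; ring.
  have li : 0 <= l^-1 by rewrite invr_ge0 ltW.
  have le0 := ltW (Hlen e).
  rewrite abs_prod.
  - congr (_ * _); rewrite ex.
    have -> : ((vpos X (tgt T e)).1 - (twist T e)%:~R * l - c) / l =
            ((vpos X (tgt T e)).1 - c) / l - (twist T e)%:~R.
      by field; exact: lt0r_neq0.
    by rewrite floor_sub_int.
  - move=> hs; rewrite subr_ge0; apply: le_floor; apply: ler_wpM2r => //.
    rewrite lerD2r lerDl; apply: mulr_ge0 => //; by rewrite ler0z.
  - move=> hs; rewrite subr_le0; apply: le_floor; apply: ler_wpM2r => //.
    rewrite lerD2r gerDl; apply: mulr_ge0_le0 => //; by rewrite lerz0.
rewrite /fiber_int (eq_bigr _ (fun e _ => cr e)).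
have part : forall f : 'I_(ne T) -> 'I_(nv T),
   \sum_e (eslope T e).1 * F (f e) = \sum_v F v * \sum_(e | f e == v) (eslope T e).1.
  move=> f; rewrite (partition_big f xpredT) //=; apply: eq_bigr => v _.
  by rewrite mulr_sumr; apply: eq_bigr => e /eqP ->; rewrite mulrC.
have E : \sum_e (eslope T e).1 * F (tgt T e) = \sum_e (eslope T e).1 * F (src T e).
  rewrite !part; apply: eq_bigr => v _; congr (_ * _).
  by apply/eqP; rewrite eq_sym -subr_eq0; apply/eqP; apply: bal_x.
have -> : \sum_e (eslope T e).1 * (F (tgt T e) - twist T e - F (src T e)) =
   \sum_e (eslope T e).1 * F (tgt T e) - \sum_e (eslope T e).1 * F (src T e)
   - \sum_e (eslope T e).1 * twist T e.
  by rewrite -!sumrB; apply: eq_bigr => e _; ring.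
by rewrite E subrr sub0r.
Qed.
End Fiber.

Section Generic.
Variable R : realType.
Variable l : R.
Hypothesis lpos : 0 < l.

Definition gnext (x : R) : R := x + (Num.floor (- x / l) + 1)%:~R * l.

Lemma gnext_pos x : 0 < gnext x.
Proof.
rewrite /gnext; have h := floorD1_gt (- x / l).
have : - x < (Num.floor (- x / l) + 1)%:~R * l.
  by rewrite -ltr_pdivrMr.
lra.
Qed.

Lemma small_c (xs : seq R) : exists c, 0 < c /\ forall x, x \in xs -> c < gnext x.
Proof.
elim: xs => [|x xs [c [c0 hc]]]; first by exists 1; split.
have gp := gnext_pos x.
case: (ltP c (gnext x)) => hcx.
  exists c; split => // y; rewrite inE => /orP [/eqP ->|/hc] //.
exists (gnext x / 2); split; first by lra.
move=> y; rewrite inE => /orP [/eqP ->|/hc]; lra.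
Qed.

Lemma exists_generic (xs : seq R) :
  exists c, forall x, x \in xs -> ~ is_intR ((x - c) / l).
Proof.
have [c [c0 hc]] := small_c xs.
exists c => x /hc hx [m hm].
move: hx; rewrite /gnext.
set k := Num.floor (- x / l).
have hk : k%:~R <= - x / l by apply: floor_le.
set X := x / l in hk hm.
have xe : x = X * l by rewrite /X divfK // lt0r_neq0.
set u := c / l in hm.
have ce : c = u * l by rewrite /u divfK // lt0r_neq0.
have u0 : 0 < u by rewrite /u divr_gt0.
have hm' : X - u = m%:~R by rewrite -hm xe ce; field; exact: lt0r_neq0.
rewrite xe ce => hlt.
have hu : u < X + k%:~R + 1.
  rewrite -subr_gt0; have : 0 < (X + k%:~R + 1 - u) * l by rewrite mulrBl mulrDl mulrDl mul1r; lra.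
  by rewrite pmulr_lgt0.
have hX : - x / l = - X by rewrite /X mulNr.
rewrite hX in hk.
have a1 : k%:~R < (- m)%:~R :> R by rewrite intrN -hm'; lra.
have a2 : (- m)%:~R < (k + 1)%:~R :> R by rewrite intrN intrD -hm'; lra.
rewrite ltr_int in a1; rewrite ltr_int in a2; lia.
Qed.
End Generic.

Lemma eps_fin (R : realType) (I : finType) (a b : I -> R) :
  (forall i, 0 < a i) -> exists eps, 0 < eps /\ forall i, 0 < a i + eps * b i.
Proof.
move=> ha.
pose S := \sum_i `|b i| / a i.
have S0 : 0 <= S by apply: sumr_ge0 => i _; rewrite divr_ge0 // ltW.
have S1 : 0 < 1 + S by lra.
pose e := 1 / (1 + S).
have e0 : 0 < e by rewrite divr_gt0.
have eS : e * S = 1 - e by rewrite /e; field; rewrite lt0r_neq0.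
exists e; split => // i.
have Si : `|b i| / a i <= S.
  rewrite /S (bigD1 i) //= lerDl; apply: sumr_ge0 => j _; apply: divr_ge0 => //; exact: ltW.
have hb : `|b i| <= S * a i by move: Si; rewrite ler_pdivrMr.
have hb2 : - `|b i| <= b i by rewrite lerNl; have := ler_norm (- b i); rewrite normrN.
have h1 : e * (- (S * a i)) <= e * b i.
  apply: ler_wpM2l; first exact: ltW.
  lra.
have h2 : e * (- (S * a i)) = - a i + e * a i by rewrite mulrN mulrA eS; ring.
have h3 : 0 < e * a i by rewrite mulr_gt0.
lra.
Qed.

Section Main.
Variable R : realType.
Variable delta : bool.
Variable l : R.
Variable n : nat.
Variable T : ctype n.
Hypothesis lpos : 0 < l.
Hypothesis Hcon : connected_type T.
Hypothesis Hbal : balanced delta T.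
Hypothesis Htri : trivalent delta T.
Hypothesis Himm : immersion delta T.
Hypothesis Hend : (0 < nend T)%N.

Lemma fcellB (X Y : cellpt R T) : fcell delta (X - Y) = fcell delta X - fcell delta Y.
Proof.
have -> : X - Y = (-1) *: Y + X by rewrite scaleN1r addrC.
by rewrite fcell_lin scaleN1r addrC.
Qed.

Lemma vec0 : vec (0 : cellpt R T) = 0.
Proof. by rewrite /vec /= !row_mx0. Qed.

Lemma vec_sum k (c : 'I_k -> R) (Xs : 'I_k -> cellpt R T) :
  vec (\sum_i c i *: Xs i) = \sum_i c i *: vec (Xs i).
Proof.
elim/big_rec2: _ => [|i x y _ <-]; first exact: vec0.
exact: vec_lin.
Qed.

Lemma rankMx : \rank (Mx R delta T) = Ed T.
Proof.
rewrite -mxrank_tr; apply/eqP; apply: row_free_of => v Hv.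
exact: (stress_zero Hv Hbal Himm Htri Hcon Hend).
Qed.

Lemma kdim : \rank (kermx (Mx R delta T)) = (Dd T - Ed T)%N.
Proof. by rewrite mxrank_ker rankMx. Qed.

Lemma upper (P : cellpt R T -> Prop)
  (HP : forall X, P X -> fcell delta X = tau delta l T) k :
  (Dd T - Ed T <= k)%N ->
  forall p : 'I_k.+2 -> cellpt R T, (forall i, P (p i)) -> ~ aff_indep p.
Proof.
move=> Hk p Pp Hind.
pose B : 'M[R]_(k.+1, Dd T) := \matrix_(i < k.+1) vec (p (lift ord0 i) - p ord0).
have sub : (B <= kermx (Mx R delta T))%MS.
  apply/row_subP => i; rewrite rowK; apply/sub_kermxP.
  by rewrite MxE unvecK fcellB !HP // subrr.
have rf : row_free B.
  apply: row_free_of => c hc; apply/rowP => i; rewrite mxE.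
  apply: (Hind (fun i => c 0 i)).
  apply: vec_inj; rewrite vec_sum vec0 -[RHS]hc mulmx_sum_row; apply: eq_bigr => j _.
  by rewrite rowK.
have := mxrankS sub; rewrite kdim (eqP rf) => h.
by have := leq_trans h Hk; rewrite ltnn.
Qed.


Lemma perturb (X0 Y : cellpt R T) : in_cell delta l X0 -> fcell delta Y = 0 ->
  exists e, 0 < e /\ in_cell delta l (X0 + e *: Y).
Proof.
move=> H0 fY; have [H0l H0e H0m] := H0.
pose a (i : ('I_(ne T) + ('I_n + 'I_n))%type) : R :=
  match i with
  | inl e => elen X0 e
  | inr (inl j) => mpos X0 j
  | inr (inr j) => match mark T j with inl e => elen X0 e - mpos X0 j | inr _ => 1 end
  end.
pose b (i : ('I_(ne T) + ('I_n + 'I_n))%type) : R :=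
  match i with
  | inl e => elen Y e
  | inr (inl j) => mpos Y j
  | inr (inr j) => match mark T j with inl e => elen Y e - mpos Y j | inr _ => 0 end
  end.
have ha : forall i, 0 < a i.
  case=> [e|[j|j]] /=; first exact: H0l.
    by move: (H0m j); case: (mark T j) => [e /andP [h _]|_ h].
  by move: (H0m j); case: (mark T j) => [e /andP [_ h]|_ //]; rewrite subr_gt0.
have [eps [e0 he]] := eps_fin b ha.
exists eps; split => //; split.
- by move=> e; have := he (inl e); rewrite /elen /= !mxE mulrC.
- apply/(eqs_iff delta l); rewrite addrC fcell_lin fY scaler0 add0r.
  exact/(eqs_iff delta l).
- move=> j; have := he (inr (inl j)); have := he (inr (inr j)).
  rewrite /a /b /mpos /elen /= !mxE.
  case: (mark T j) => [e|x] /= h1 h2; last exact: h2.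
  apply/andP; split; first exact: h2.
  rewrite -subr_gt0; move: h1; rewrite !mxE; congr (_ < _); ring.
Qed.

Lemma lower (X0 : cellpt R T) : in_cell delta l X0 ->
  exists p : 'I_(Dd T - Ed T).+1 -> cellpt R T,
    (forall i, in_cell delta l (p i)) /\ aff_indep p.
Proof.
move=> H0.
have gen : forall m (K : 'M[R]_(m, Dd T)), row_free K -> (K <= kermx (Mx R delta T))%MS ->
  exists p : 'I_m.+1 -> cellpt R T, (forall i, in_cell delta l (p i)) /\ aff_indep p.
  move=> m K rf sub.
  pose Y i := unvec (row i K).
  have fY : forall i, fcell delta (Y i) = 0.
    move=> i; rewrite /Y -MxE; apply/sub_kermxP; exact: submx_trans (row_sub i K) sub.
  have hex : forall i : 'I_m, exists e, 0 < e /\ in_cell delta l (X0 + e *: Y i).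
    by move=> i; apply: perturb.
  have [eps heps] := fin_all_exists hex.
  exists (fun j => if unlift ord0 j is Some i then X0 + eps i *: Y i else X0); split.
    by move=> j; case: unliftP => [i _|_] //; exact: (heps i).2.
  move=> c hc i.
  have hc' : \sum_j (c j * eps j) *: row j K = 0.
    have : \sum_j (c j * eps j) *: Y j = 0.
      rewrite -[RHS]hc; apply: eq_bigr => j _.
      by rewrite liftK unlift_none addrAC subrr add0r scalerA.
    move/(congr1 (@vec R n T)); rewrite vec_sum vec0 => h; rewrite -[RHS]h.
    by apply: eq_bigr => j _; rewrite /Y vecK.
  have : (\row_j (c j * eps j)) *m K = 0 *m K.
    by rewrite mul0mx mulmx_sum_row -[RHS]hc'; apply: eq_bigr => j _; rewrite mxE.
  move/(row_free_inj rf)/rowP/(_ i); rewrite !mxE => /eqP.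
  by rewrite mulf_eq0 (negbTE (lt0r_neq0 (heps i).1)) orbF => /eqP.
rewrite -kdim; apply: gen; first exact: row_base_free.
by rewrite eq_row_base.
Qed.

Lemma locus_all a2 b2 (X0 : cellpt R T) : locus delta l T a2 b2 X0 ->
  forall X, in_cell delta l X -> locus delta l T a2 b2 X.
Proof.
case=> H0 [Hv Hw Hf] X HX; split => //; split => // c _.
have [c0 hc0] := exists_generic lpos [seq (vpos X0 v).1 | v <- enum 'I_(nv T)].
have g0 : generic_fiber l X0 c0.
  by move=> v; apply: hc0; apply: map_f; rewrite mem_enum.
rewrite -(Hf c0 g0) (fiber_const lpos Hbal Hv _ HX) (fiber_const lpos Hbal Hv _ H0) //.
Qed.

End Main.

Unset Implicit Arguments. Set Strict Implicit.

Theorem proposition2p12 (R : realType) (delta : bool) (l : R) (g n : nat)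
    (a2 b2 : int) (mu : seq nat) :
  0 < l ->
  (2 %| b2 - (nat_of_bool delta)%:Z * a2)%Z ->
  (0 < mu_card mu)%N ->
  b2 = (mu_norm mu)%:Z ->
  forall T : ctype n, simple_type delta g mu T ->
  (exists X, locus delta l T a2 b2 X) ->
  has_dim (V := cellpt R T) (locus delta l T a2 b2) (mu_card mu + g - 1 + n)%N.
Proof.
move=> lpos _ mu0 hb2 T [Hcon Hgen Hbal Htri [Himm Hvert Hpro]] [X0 HX0].
have hend := count_ends Himm Hpro.
have h3 := count3 Htri.
have Hend : (0 < nend T)%N by rewrite hend.
have dE : (mu_card mu + g - 1 + n)%N = (Dd T - Ed T)%N.
  by rewrite /Dd /Ed; move: Hgen; rewrite /has_genus; lia.
rewrite dE; split.
  have [p [hp hind]] := lower Hcon Hbal Htri Himm Hend HX0.1.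
  by exists p; split => // i; apply: (locus_all lpos Hbal HX0 (hp i)).
move=> p hp.
apply: (upper Hcon Hbal Htri Himm Hend (P := locus delta l T a2 b2) _ (leqnn _) hp).
move=> X [[_ He _] _]; exact/(eqs_iff delta l).
Qed.
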